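(* Let $(L,\le,\bot,\top)$ be a complete lattice and $(\&_i,\swarrow^i,\nwarrow_i)$, $i=1,\dots,n$, adjoint triples on $L$ with $x\,\&_i\,\top=\top\,\&_i\,x=x$ for all $x\in L$ and all $i$. Let $(A,B,R,\sigma)$ be a normalized context with concept lattice $\mathcal{M}$. If $\mathcal{M}$ has a decomposition into independent blocks, then $(A,B,R,\sigma)$ can be decomposed into independent subcontexts.
   Context: An adjoint triple on $L$ is a triple of maps $\&,\swarrow,\nwarrow\colon L\times L\to L$ with $x\le z\swarrow y\iff x\& y\le z\iff y\le z\nwarrow x$. A context is $(A,B,R,\sigma)$ with $A,B$ non-empty, $R\colon A\times B\to L$, $\sigma\colon A\times B\to\{1,\dots,n\}$; normalized means every $a\in A$ has $b_1,b_2$ with $R(a,b_1)\ne\bot$, $R(a,b_2)=\bot$, and every $b\in B$ has $a_1,a_2$ with $R(a_1,b)\ne\bot$, $R(a_2,b)=\bot$. For $g\colon B\to L$, $f\colon A\to L$: $g^\uparrow(a)=\inf_{b}R(a,b)\swarrow^{\sigma(a,b)}g(b)$, $f^\downarrow(b)=\inf_{a}R(a,b)\nwarrow_{\sigma(a,b)}f(a)$. $\mathcal{M}$ is the complete lattice of pairs $\langle g,f\rangle$ with $g^\uparrow=f$, $f^\downarrow=g$, ordered by $g_1\le g_2$ pointwise. For a bounded lattice $(M,\preceq,\bot,\top)$, a block is a sublattice $K\subsetneq M$ with $K\setminus\{\bot,\top\}\ne\varnothing$ and $(\{x\mid k\preceq x\}\cup\{x\mid x\preceq k\})\setminus\{\bot,\top\}\subseteq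 K$ for all $k\in K\setminus\{\bot,\top\}$; blocks $K_1,K_2$ are independent if $K_1\cap K_2\subseteq\{\bot,\top\}$; a decomposition into independent blocks is a family of pairwise independent blocks whose union is $M$. A separable subcontext is a tuple $(Y,X,R_{Y\times X},\sigma_{Y\times X})$ (restrictions of $R,\sigma$) with $Y\subsetneq A$, $X\subsetneq B$ non-empty, $R(a,b)\neq\bot$ for some $a\in Y,b\in X$, $R=\bot$ on $Y\times(B\setminus X)$ and on $(A\setminus Y)\times X$. $\&$ has zero-divisors if $x\&y=\bot$ for some $x,y\neq\bot$. A decomposition into independent subcontexts is a family $\{(A_\lambda,B_\lambda,R_\lambda,\sigma_\lambda)\}_{\lambda\in\Lambda}$, $\Lambda\ne\varnothing$, $R_\lambda,\sigma_\lambda$ restrictions to $A_\lambda\times B_\lambda$, such that each tuple is a separable subcontext, the $A_\lambda$ are pairwise disjoint with union $A$, the $B_\lambda$ are pairwise disjoint with union $B$, and for each $\lambda$ the conjunctor $\&_{\sigma(a,b)}$ has no zero-divisors for all $(a,b)\in((A\setminus A_\lambda)\times B_\lambda)\cup(A_\lambda\times(B\setminus B_\lambda))$. *)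

(* Defs.v *)
From mathcomp Require Import ssreflect ssrbool eqtype ssrnat fintype.

Set Implicit Arguments.
Unset Strict Implicit.

Record complete_lattice := CompleteLattice {
  carrier :> Type;
  le : carrier -> carrier -> Prop;
  le_refl : forall x, le x x;
  le_trans : forall x y z, le x y -> le y z -> le x z;
  le_antisym : forall x y, le x y -> le y x -> x = y;
  inf : (carrier -> Prop) -> carrier;
  inf_lb : forall (S : carrier -> Prop) x, S x -> le (inf S) x;
  inf_glb : forall (S : carrier -> Prop) y, (forall x, S x -> le y x) -> le y (inf S)
}.

Definition lbot (L : complete_lattice) : L := inf (fun _ : L => True).
Definition ltop (L : complete_lattice) : L := inf (fun _ : L => False).

Section Context.
Variables (L : complete_lattice) (n : nat).
(* conj i x y = x &_i y ; sw i z y = z swarrow^i y ; nw i z x = z nwarrow_i x *)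
Variables (conj sw nw : 'I_n -> L -> L -> L).

Definition adjoint_triple (i : 'I_n) : Prop :=
  forall x y z : L,
    (le x (sw i z y) <-> le (conj i x y) z) /\
    (le (conj i x y) z <-> le y (nw i z x)).

Definition top_is_unit (i : 'I_n) : Prop :=
  forall x : L, conj i x (ltop L) = x /\ conj i (ltop L) x = x.

Definition has_zero_divisors (i : 'I_n) : Prop :=
  exists x y : L, x <> lbot L /\ y <> lbot L /\ conj i x y = lbot L.

Variables (A B : Type) (R : A -> B -> L) (sigma : A -> B -> 'I_n).

Definition normalized_context : Prop :=
  (exists a : A, True) /\ (exists b : B, True) /\
  (forall a, exists b1 b2, R a b1 <> lbot L /\ R a b2 = lbot L) /\
  (forall b, exists a1 a2, R a1 b <> lbot L /\ R a2 b = lbot L).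

Definition up (g : B -> L) (a : A) : L :=
  inf (fun x => exists b, x = sw (sigma a b) (R a b) (g b)).
Definition down (f : A -> L) (b : B) : L :=
  inf (fun x => exists a, x = nw (sigma a b) (R a b) (f a)).

Definition concept := ((B -> L) * (A -> L))%type.
Definition is_concept (c : concept) : Prop :=
  up (fst c) = snd c /\ down (snd c) = fst c.
Definition concept_le (c1 c2 : concept) : Prop :=
  forall b, le (fst c1 b) (fst c2 b).

Definition M_bot (c : concept) : Prop :=
  is_concept c /\ forall c', is_concept c' -> concept_le c c'.
Definition M_top (c : concept) : Prop :=
  is_concept c /\ forall c', is_concept c' -> concept_le c' c.
Definition nontrivial (c : concept) : Prop := ~ M_bot c /\ ~ M_top c.

Definition M_meet (x y z : concept) : Prop :=
  is_concept z /\ concept_le z x /\ concept_le z y /\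
  forall w, is_concept w -> concept_le w x -> concept_le w y -> concept_le w z.
Definition M_join (x y z : concept) : Prop :=
  is_concept z /\ concept_le x z /\ concept_le y z /\
  forall w, is_concept w -> concept_le x w -> concept_le y w -> concept_le z w.

Definition is_block (K : concept -> Prop) : Prop :=
  (forall c, K c -> is_concept c) /\
  (forall x y z, K x -> K y -> M_meet x y z -> K z) /\
  (forall x y z, K x -> K y -> M_join x y z -> K z) /\
  (exists c, is_concept c /\ ~ K c) /\
  (exists k, K k /\ nontrivial k) /\
  (forall k, K k -> nontrivial k ->
     forall x, is_concept x -> (concept_le k x \/ concept_le x k) ->
       nontrivial x -> K x).

Definition independent_blocks (K1 K2 : concept -> Prop) : Prop :=
  forall c, K1 c -> K2 c -> M_bot c \/ M_top c.

Definition decomposition_into_independent_blocks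
  (I : Type) (K : I -> concept -> Prop) : Prop :=
  (forall i, is_block (K i)) /\
  (forall i j, i <> j -> independent_blocks (K i) (K j)) /\
  (forall c, is_concept c -> exists i, K i c).

Definition separable_subcontext (Y : A -> Prop) (X : B -> Prop) : Prop :=
  (exists a, Y a) /\ (exists a, ~ Y a) /\
  (exists b, X b) /\ (exists b, ~ X b) /\
  (exists a b, Y a /\ X b /\ R a b <> lbot L) /\
  (forall a b, Y a -> ~ X b -> R a b = lbot L) /\
  (forall a b, ~ Y a -> X b -> R a b = lbot L).

Definition decomposition_into_independent_subcontexts
  (Lam : Type) (As : Lam -> A -> Prop) (Bs : Lam -> B -> Prop) : Prop :=
  (exists l : Lam, True) /\
  (forall l, separable_subcontext (As l) (Bs l)) /\
  (forall l m, l <> m -> forall a, ~ (As l a /\ As m a)) /\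
  (forall a, exists l, As l a) /\
  (forall l m, l <> m -> forall b, ~ (Bs l b /\ Bs m b)) /\
  (forall b, exists l, Bs l b) /\
  (forall l a b, ((~ As l a /\ Bs l b) \/ (As l a /\ ~ Bs l b)) ->
     ~ has_zero_divisors (sigma a b)).

End Context.

(* Main.v *)
Require Import Defs.
From mathcomp Require Import ssreflect ssrbool eqtype ssrnat fintype.
From Stdlib Require Import Classical ClassicalEpsilon FunctionalExtensionality.

Section Proofs.
Variables (L : complete_lattice) (n : nat) (conj sw nw : 'I_n -> L -> L -> L).
Hypothesis Hadj : forall i, adjoint_triple conj sw nw i.
Hypothesis Hunit : forall i, top_is_unit conj i.
Variables (A B : Type) (R : A -> B -> L) (sigma : A -> B -> 'I_n).
Hypothesis Hnorm : normalized_context R.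

Notation bot := (lbot L).
Notation top := (ltop L).
Notation upR := (up sw R sigma).
Notation downR := (down nw R sigma).
Notation isC := (is_concept sw nw R sigma).
Notation NT := (nontrivial sw nw R sigma).

Lemma bot_le (x : L) : le bot x. Proof. by apply: inf_lb. Qed.
Lemma le_top (x : L) : le x top. Proof. by apply: inf_glb => y []. Qed.
Lemma le_bot_eq (x : L) : le x bot -> x = bot.
Proof. move=> h; apply: le_antisym h (bot_le x). Qed.
Lemma nb {x : L} : x <> bot -> ~ le x bot.
Proof. by move=> h /le_bot_eq. Qed.

Lemma adj1 i (x y z : L) : le x (sw i z y) <-> le (conj i x y) z.
Proof. exact: (proj1 (Hadj i x y z)). Qed.
Lemma adj2 i (x y z : L) : le (conj i x y) z <-> le y (nw i z x).
Proof. exact: (proj2 (Hadj i x y z)). Qed.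

Lemma conj_mono2 i (x y y' : L) : le y y' -> le (conj i x y) (conj i x y').
Proof. move=> h; apply/adj2; apply: le_trans h _; apply/adj2; apply: le_refl. Qed.
Lemma conj_mono1 i (x x' y : L) : le x x' -> le (conj i x y) (conj i x' y).
Proof. move=> h; apply/adj1; apply: le_trans h _; apply/adj1; apply: le_refl. Qed.
Lemma conj_botl i (y z : L) : le (conj i bot y) z. Proof. apply/adj1; apply: bot_le. Qed.
Lemma conj_botr i (x z : L) : le (conj i x bot) z. Proof. apply/adj2; apply: bot_le. Qed.
Lemma sw_top i (z : L) : le (sw i z top) z.
Proof. have := proj1 (adj1 _ _ _ _) (le_refl (sw i z top)). by rewrite (proj1 (Hunit i _)). Qed.
Lemma nw_top i (z : L) : le (nw i z top) z.
Proof. have := proj2 (adj2 _ _ _ _) (le_refl (nw i z top)). by rewrite (proj2 (Hunit i _)). Qed.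

Definition gle (g1 g2 : B -> L) := forall b, le (g1 b) (g2 b).
Definition fle (f1 f2 : A -> L) := forall a, le (f1 a) (f2 a).

Lemma galois g f : gle g (downR f) <-> fle f (upR g).
Proof.
split => h.
- move=> a; apply: inf_glb => _ [b ->]; apply/adj1; apply/adj2.
  apply: le_trans (h b) _; apply: inf_lb; by exists a.
- move=> b; apply: inf_glb => _ [a ->]; apply/adj2; apply/adj1.
  apply: le_trans (h a) _; apply: inf_lb; by exists b.
Qed.

Lemma ext_cl g : gle g (downR (upR g)). Proof. by apply/galois => a; apply: le_refl. Qed.
Lemma int_cl f : fle f (upR (downR f)). Proof. by apply/galois => b; apply: le_refl. Qed.
Lemma up_anti g1 g2 : gle g1 g2 -> fle (upR g2) (upR g1).
Proof. move=> h; apply/galois => b; apply: le_trans (h b) (ext_cl g2 b). Qed.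
Lemma down_anti f1 f2 : fle f1 f2 -> gle (downR f2) (downR f1).
Proof. move=> h; apply/galois => a; apply: le_trans (h a) (int_cl f2 a). Qed.

Definition E (g : B -> L) : concept L A B := (downR (upR g), upR g).

Lemma E_concept g : isC (E g).
Proof.
split => //=. apply: functional_extensionality => a; apply: le_antisym.
- apply: up_anti (ext_cl g) a.
- apply: int_cl.
Qed.

Lemma le_conc g c : isC c -> gle g (fst c) -> concept_le (E g) c.
Proof.
case: c => g' f' [/= Hu Hd] h. rewrite -Hd in h *.
move/galois: h => h b /=. exact: down_anti h b.
Qed.

Lemma up_top_bot a : le (upR (fun _ => top) a) bot.
Proof.
case: Hnorm => _ [_ [HA _]]. case: (HA a) => b1 [b2 [_ Hb2]].
apply: le_trans (_ : le _ (sw (sigma a b2) (R a b2) top)) _.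
- apply: inf_lb; by exists b2.
- rewrite -Hb2; apply: sw_top.
Qed.

Lemma down_top_bot b : le (downR (fun _ => top) b) bot.
Proof.
case: Hnorm => _ [_ [_ HB]]. case: (HB b) => a1 [a2 [_ Ha2]].
apply: le_trans (_ : le _ (nw (sigma a2 b) (R a2 b) top)) _.
- apply: inf_lb; by exists a2.
- rewrite -Ha2; apply: nw_top.
Qed.

Lemma Mbot_char c : M_bot sw nw R sigma c -> forall b, le ((fst c) b) bot.
Proof.
case=> _ H b. have := H _ (E_concept (fun _ => bot)) b => /= h.
apply: le_trans h _. apply: le_trans (down_top_bot b).
apply: down_anti => a. apply: inf_glb => _ [b' ->]; apply/adj1; apply: conj_botr.
Qed.

Lemma Mtop_char c : M_top sw nw R sigma c -> forall a, le ((snd c) a) bot.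
Proof.
case=> [[Hu Hd]] H a. have h := H _ (E_concept (fun _ => top)).
have h2 : gle (fun _ => top) (downR (snd c)).
  by move=> b; rewrite Hd; apply: le_trans (ext_cl _ b) (h b).
have h3 := proj1 (galois _ _) h2. apply: le_trans (h3 a) (up_top_bot a).
Qed.

Lemma NT_intro c : isC c -> (exists b, ~ le ((fst c) b) bot) -> (exists a, ~ le ((snd c) a) bot) -> NT c.
Proof.
move=> Hc [b Hb] [a Ha]; split.
- by move/Mbot_char/(_ b).
- by move/Mtop_char/(_ a).
Qed.

Lemma NT_ext c : NT c -> isC c -> exists b, ~ le ((fst c) b) bot.
Proof.
case=> Hb _ Hc. apply: NNPP => Hn. apply: Hb; split => // c' _ b.
apply: le_trans (bot_le _). apply: NNPP => h. apply: Hn; by exists b.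
Qed.

Definition ptB (b : B) (v : L) : B -> L :=
  fun b' => if excluded_middle_informative (b' = b) then v else bot.
Definition ptA (a : A) (v : L) : A -> L :=
  fun a' => if excluded_middle_informative (a' = a) then v else bot.

Lemma ptB_at b v : ptB b v b = v.
Proof. rewrite /ptB; by destruct (excluded_middle_informative (b = b)). Qed.
Lemma ptA_at a v : ptA a v a = v.
Proof. rewrite /ptA; by destruct (excluded_middle_informative (a = a)). Qed.

Lemma ptB_le g b v : le v (g b) -> gle (ptB b v) g.
Proof. move=> h b'; rewrite /ptB; destruct (excluded_middle_informative (b' = b)) as [e|e]; [by subst b' | apply: bot_le]. Qed.

Lemma ptA_mono a x y : le x y -> fle (ptA a x) (ptA a y).
Proof. move=> h a'; rewrite /ptA; destruct (excluded_middle_informative (a' = a)) => //; apply: le_refl. Qed.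

Lemma up_ptB a b v x : le (conj (sigma a b) x v) (R a b) -> le x (upR (ptB b v) a).
Proof.
move=> h; apply: inf_glb => _ [b' ->]; apply/adj1.
rewrite /ptB; destruct (excluded_middle_informative (b' = b)) as [e|e]; [by subst b' | apply: conj_botr].
Qed.

Lemma down_ptA a b v y : le (conj (sigma a b) v y) (R a b) -> le y (downR (ptA a v) b).
Proof.
move=> h; apply: inf_glb => _ [a' ->]; apply/adj2.
rewrite /ptA; destruct (excluded_middle_informative (a' = a)) as [e|e]; [by subst a' | apply: conj_botl].
Qed.

Lemma top_nb : ~ le top bot.
Proof.
case: Hnorm => [[a _] [_ [HA _]]]. case: (HA a) => b1 [_ [H _]].
move=> h; apply: (nb H (le_trans (le_top _) h)).
Qed.

Definition del b v := E (ptB b v).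
Definition gam b := del b top.
Definition mu a := E (downR (ptA a top)).
Definition zdc a x := E (downR (ptA a x)).

Lemma del_NT b v : ~ le v bot -> NT (del b v).
Proof.
move=> hv; apply: NT_intro; first exact: E_concept.
- exists b => /= h; apply: hv; apply: le_trans h; rewrite -{1}(ptB_at b v); apply: ext_cl.
- case: Hnorm => _ [_ [_ HB]]. case: (HB b) => a1 [_ [H _]].
  exists a1 => /= h; apply: (nb H); apply: le_trans h.
  apply: up_ptB. apply: le_trans (conj_mono2 _ _ _ _ (le_top v)) _.
  rewrite (proj1 (Hunit _ _)); apply: le_refl.
Qed.

Lemma gam_NT b : NT (gam b). Proof. apply: del_NT; exact: top_nb. Qed.

Lemma mu_NT a : NT (mu a).
Proof.
apply: NT_intro; first exact: E_concept.
- case: Hnorm => _ [_ [HA _]]. case: (HA a) => b1 [_ [H _]].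
  exists b1 => /= h; apply: (nb H); apply: le_trans h.
  apply: le_trans (ext_cl _ b1). apply: down_ptA.
  rewrite (proj2 (Hunit _ _)); apply: le_refl.
- exists a => /= h; apply: top_nb; apply: le_trans h.
  rewrite -{1}(ptA_at a top); apply: int_cl.
Qed.

Lemma zdc_NT a b x y : ~ le x bot -> ~ le y bot -> conj (sigma a b) x y = bot -> NT (zdc a x).
Proof.
move=> hx hy hxy; apply: NT_intro; first exact: E_concept.
- exists b => /= h; apply: hy; apply: le_trans h.
  apply: le_trans (ext_cl _ b). apply: down_ptA. rewrite hxy; apply: bot_le.
- exists a => /= h; apply: hx; apply: le_trans h.
  rewrite -{1}(ptA_at a x); apply: int_cl.
Qed.

Lemma del_gam b v : concept_le (del b v) (gam b).
Proof.
apply: le_conc; first exact: E_concept.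
apply: ptB_le => /=. apply: le_trans (le_top v) _.
rewrite -{1}(ptB_at b top); apply: ext_cl.
Qed.

Lemma del_mu a b : concept_le (del b (R a b)) (mu a).
Proof.
apply: le_conc; first exact: E_concept.
apply: ptB_le => /=. apply: le_trans (ext_cl _ b). apply: down_ptA.
rewrite (proj2 (Hunit _ _)); apply: le_refl.
Qed.

Lemma mu_zdc a x : concept_le (mu a) (zdc a x).
Proof.
apply: le_conc; first exact: E_concept.
move=> b /=. apply: le_trans (ext_cl _ b). apply: down_anti.
apply: ptA_mono; apply: le_top.
Qed.

Lemma del_zdc a b x y : conj (sigma a b) x y = bot -> concept_le (del b y) (zdc a x).
Proof.
move=> hxy; apply: le_conc; first exact: E_concept.
apply: ptB_le => /=. apply: le_trans (ext_cl _ b). apply: down_ptA.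
rewrite hxy; apply: bot_le.
Qed.

Section Blocks.
Variables (I : Type) (K : I -> concept L A B -> Prop).
Hypothesis HK : decomposition_into_independent_blocks sw nw R sigma K.

Lemma same c d : isC c -> isC d -> NT c -> NT d ->
  (concept_le c d \/ concept_le d c) -> forall i, K i c <-> K i d.
Proof.
move=> Hc Hd Nc Nd Hcd i. case: HK => Hb _.
have [_ [_ [_ [_ [_ Hconv]]]]] := Hb i.
split => h.
- exact: (Hconv c h Nc d Hd Hcd Nd).
- apply: (Hconv d h Nd c Hc _ Nc). by case: Hcd; [right|left].
Qed.
Arguments same {c d}.

Lemma uniq_blk c i j : NT c -> K i c -> K j c -> i = j.
Proof.
move=> [N1 N2] hi hj. apply: NNPP => hij. case: HK => _ [Hind _].
by case: (Hind i j hij c hi hj).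
Qed.

Lemma SB1 a b : R a b <> bot -> forall i, K i (mu a) <-> K i (gam b).
Proof.
move=> H i. have Nd := del_NT b (R a b) (nb H).
rewrite (same (E_concept _) (E_concept _) (mu_NT a) Nd (or_intror (del_mu a b)) i).
exact: (same (E_concept _) (E_concept _) Nd (gam_NT b) (or_introl (del_gam b _)) i).
Qed.

Lemma SB2 a b : has_zero_divisors conj (sigma a b) -> forall i, K i (mu a) <-> K i (gam b).
Proof.
case=> x [y [hx [hy hxy]]] i.
have Nd := del_NT b y (nb hy).
have Nz := zdc_NT a b x y (nb hx) (nb hy) hxy.
rewrite (same (E_concept _) (E_concept _) (mu_NT a) Nz (or_introl (mu_zdc a x)) i).
rewrite (same (E_concept _) (E_concept _) Nz Nd (or_intror (del_zdc a b x y hxy)) i).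
exact: (same (E_concept _) (E_concept _) Nd (gam_NT b) (or_introl (del_gam b _)) i).
Qed.

Lemma blk_has_gam i k : K i k -> NT k -> exists b, K i (gam b).
Proof.
move=> hk Nk. case: HK => Hb _. have [Hcon _] := Hb i.
have Ck := Hcon k hk. case: (NT_ext k Nk Ck) => b hb.
exists b. have Nd := del_NT b _ hb.
have h1 : concept_le (del b (fst k b)) k.
  apply: le_conc => //; apply: ptB_le; apply: le_refl.
apply/(same (E_concept _) (E_concept _) Nd (gam_NT b) (or_introl (del_gam b _)) i).
apply/(same (E_concept _) Ck Nd Nk (or_introl h1) i). done.
Qed.

Arguments blk_has_gam {i k}.
Arguments uniq_blk {c i j}.
Arguments SB1 {a b}.
Arguments SB2 {a b}.
Lemma blk_has_mu_gam i k : K i k -> NT k -> exists a b, K i (mu a) /\ K i (gam b) /\ R a b <> bot.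
Proof.
move=> hk Nk. case: (blk_has_gam hk Nk) => b hb.
case: Hnorm => _ [_ [_ HB]]. case: (HB b) => a1 [_ [H _]].
exists a1, b; split => //. by apply/(SB1 H).
Qed.

Arguments blk_has_mu_gam {i k}.
Lemma main : decomposition_into_independent_subcontexts conj R sigma
  (fun i a => K i (mu a)) (fun i b => K i (gam b)).
Proof.
case: HK => Hb [Hind Hcov].
have NTi : forall i, exists k, K i k /\ NT k.
  move=> i; have [_ [_ [_ [_ [[k [hk Nk]] _]]]]] := Hb i. by exists k.
split.
  case: Hnorm => [[a _] _]. case: (Hcov _ (E_concept (downR (ptA a top)))) => i _.
  by exists i.
split.
  move=> l. case: (NTi l) => k [hk Nk].
  case: (blk_has_mu_gam hk Nk) => a [b [ha [hb hR]]].
  have [_ [_ [_ [[c [Cc nc]] _]]]] := Hb l.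
  case: (Hcov c Cc) => j hj.
  have hjl : j <> l by move=> e; subst.
  case: (NTi j) => k' [hk' Nk'].
  case: (blk_has_mu_gam hk' Nk') => a' [b' [ha' [hb' _]]].
  split; first by exists a.
  split. exists a' => h. by apply: hjl; apply: (uniq_blk (mu_NT a')).
  split; first by exists b.
  split. exists b' => h. by apply: hjl; apply: (uniq_blk (gam_NT b')).
  split; first by exists a, b.
  split.
    move=> a0 b0 h1 h2. apply: NNPP => h3. apply: h2. by apply/(SB1 h3).
  move=> a0 b0 h1 h2. apply: NNPP => h3. apply: h1. by apply/(SB1 h3).
split.
  move=> l m hlm a [h1 h2]. by apply: hlm; apply: (uniq_blk (mu_NT a)).
split.
  move=> a. exact: (Hcov _ (E_concept _)).
split.
  move=> l m hlm b [h1 h2]. by apply: hlm; apply: (uniq_blk (gam_NT b)).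
split.
  move=> b. exact: (Hcov _ (E_concept _)).
move=> l a b H Hz. have := SB2 Hz l.
case: H => [[h1 h2]|[h1 h2]] e; [apply: h1; apply/e | apply: h2; apply/e]; done.
Qed.

End Blocks.
End Proofs.

Theorem theorem36 (L : complete_lattice) (n : nat)
  (conj sw nw : 'I_n -> L -> L -> L)
  (Hadj : forall i, adjoint_triple conj sw nw i)
  (Hunit : forall i, top_is_unit conj i)
  (A B : Type) (R : A -> B -> L) (sigma : A -> B -> 'I_n)
  (Hnorm : normalized_context R) :
  (exists (I : Type) (K : I -> concept L A B -> Prop),
      decomposition_into_independent_blocks sw nw R sigma K) ->
  exists (Lam : Type) (As : Lam -> A -> Prop) (Bs : Lam -> B -> Prop),
    decomposition_into_independent_subcontexts conj R sigma As Bs.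
Proof.
case=> I [K HK]. exists I; eexists; eexists.
exact: (main L n conj sw nw Hadj Hunit A B R sigma Hnorm I K HK).
Qed.
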